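(* Let $\Bbbk$ be a unital ring and $n,r$ positive integers. Let $\Lambda$ be a set-partition of $\{1,\dots,r\}$ and $\Lambda'$ a set-partition of $\{1,\dots,r+1\}$, each with at most $n$ parts. Then (a) $\mathbf V(\Lambda)\cong H_n(\ell(\Lambda))$ as left $\Bbbk W_n$-modules; (b) $\mathbf V'(\Lambda')\cong H_{n-1}(\ell(\Lambda')-1)$ as left $\Bbbk W_{n-1}$-modules.
   Context: $\mathbf V$ is a free $\Bbbk$-module with basis $\mathbf v_1,\dots,\mathbf v_n$; $W_n$ (symmetric group on $\{1,\dots,n\}$) acts on tensor powers by $w(\mathbf v_{j_1}\otimes\cdots\otimes\mathbf v_{j_m})=\mathbf v_{w(j_1)}\otimes\cdots\otimes\mathbf v_{w(j_m)}$, and $W_{n-1}=\{w:w(n)=n\}$ is identified with the symmetric group on $\{1,\dots,n-1\}$. The value-type of $(i_1,\dots,i_m)$ is the set-partition of $\{1,\dots,m\}$ with parts the nonempty sets $\{\alpha:i_\alpha=j\}$; $\ell$ denotes number of parts. $\mathbf V(\Lambda)\subseteq\mathbf V^{\otimes r}$ is spanned by simple tensors $\mathbf v_{i_1}\otimes\cdots\otimes\mathbf v_{i_r}$ of value-type $\Lambda$; $\mathbf V'(\Lambda')$ is spanned by $\mathbf v_{i_1}\otimes\cdots\otimes\mathbf v_{i_r}\otimes\mathbf v_n$ with $(i_1,\dots,i_r,n)$ of value-type $\Lambda'$. For $1\le l\le m$, $H_m(l)$ is the $\Bbbk W_m$-submodule of $\mathbf V_m^{\otimes l}$ (where $\mathbf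 V_m$ is free with basis $\mathbf v_1,\dots,\mathbf v_m$) generated by $\mathbf v_{m-l+1}\otimes\cdots\otimes\mathbf v_m$; $H_m(0)=\mathbf V_m^{\otimes 0}=\Bbbk$ with trivial action. *)

(* Defs.v *)
From HB Require Import structures.
From mathcomp Require Import all_boot all_order all_fingroup all_algebra.
Set Implicit Arguments. Unset Strict Implicit. Unset Printing Implicit Defensive.
Import GRing.Theory.
Local Open Scope ring_scope.

(* Conventions: indices are 0-based, {1..n} is 'I_n, v_j is index j-1.
   The tensor power V_n^{(x)m} (free k-module on basis v_{j_1}(x)...(x)v_{j_m})
   is modelled as the coefficient functions {ffun {ffun 'I_m -> 'I_n} -> k};
   the basis tensor indexed by t : {ffun 'I_m -> 'I_n} is [basis t]. *)
Definition tens (k : pzRingType) (m n : nat) := {ffun {ffun 'I_m -> 'I_n} -> k}.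

Definition basisv (k : pzRingType) (m n : nat) (t : {ffun 'I_m -> 'I_n}) : tens k m n :=
  [ffun s => (s == t)%:R].

Definition tadd (k : pzRingType) m n (x y : tens k m n) : tens k m n :=
  [ffun s => x s + y s].
Definition tscale (k : pzRingType) m n (c : k) (x : tens k m n) : tens k m n :=
  [ffun s => c * x s].

Definition tsub (k : pzRingType) m n (f : 'I_n -> 'I_n) (x : tens k m n) : tens k m n :=
  [ffun t : {ffun 'I_m -> 'I_n} => x [ffun a => f (t a)]].

(* action of w in W_n: w (v_{j_1} (x) ... ) = v_{w j_1} (x) ...,
   i.e. (w . x)(t) = x (w^-1 o t) *)
Definition Wact (k : pzRingType) m n (w : {perm 'I_n}) (x : tens k m n) : tens k m n :=
  tsub (w^-1)%g x.

(* W_{n-1} (n = m.+1) = {w | w(n) = n} identified with the permutations of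
   {1..n-1}: sigma is sent to lift_perm ord_max ord_max sigma. *)
Definition Wact' (k : pzRingType) q m (s : {perm 'I_m}) (x : tens k q m.+1) : tens k q m.+1 :=
  Wact (lift_perm ord_max ord_max s) x.

Definition valtype m n (t : {ffun 'I_m -> 'I_n}) : {set {set 'I_m}} :=
  [set [set a | t a == j] | j : 'I_n] :\ set0.

(* V(Lambda): span of simple tensors of value-type Lambda *)
Definition Vmod (k : pzRingType) n r (L : {set {set 'I_r}}) (x : tens k r n) : Prop :=
  forall t, x t != 0 -> valtype t = L.

(* V'(Lambda'): span of v_{i_1} (x) ... (x) v_{i_r} (x) v_n with
   (i_1,...,i_r,n) of value-type Lambda'  (here n = m.+1, v_n = ord_max) *)
Definition Vmod' (k : pzRingType) m r (L : {set {set 'I_r.+1}}) (x : tens k r.+1 m.+1) : Prop :=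
  forall t, x t != 0 -> t ord_max = ord_max /\ valtype t = L.

(* the generator v_{m-l+1} (x) ... (x) v_m  (0-based: position i has index m-l+i) *)
Definition Hgen m l (g : {ffun 'I_l -> 'I_m}) : Prop :=
  forall i : 'I_l, val (g i) = (m - l + i)%N.

(* H_m(l): the kW_m-submodule of V_m^{(x)l} generated by the generator,
   i.e. the set of all (sum_w c_w w) . gen.  For l = 0, V_m^{(x)0} = k with
   trivial action and this is all of k. *)
Definition Hmod (k : pzRingType) m l (x : tens k l m) : Prop :=
  exists g, Hgen g /\
  exists c : {perm 'I_m} -> k,
    x = [ffun s => \sum_(w : {perm 'I_m}) c w * Wact w (basisv k g) s].

Definition kG_iso (k : pzRingType) (G : Type) m1 n1 m2 n2
  (a1 : G -> tens k m1 n1 -> tens k m1 n1) (a2 : G -> tens k m2 n2 -> tens k m2 n2)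
  (M1 : tens k m1 n1 -> Prop) (M2 : tens k m2 n2 -> Prop) : Prop :=
  exists phi : tens k m1 n1 -> tens k m2 n2,
  [/\ (forall x, M1 x -> M2 (phi x)),
      (forall x y, M1 x -> M1 y -> phi x = phi y -> x = y),
      (forall y, M2 y -> exists2 x, M1 x & phi x = y)
    & (forall x y, M1 x -> M1 y -> phi (tadd x y) = tadd (phi x) (phi y)) /\
      (forall c x, M1 x -> phi (tscale c x) = tscale c (phi x)) /\
      (forall g x, M1 x -> phi (a1 g x) = a2 g (phi x))].

(* Main.v *)
Require Import Defs.
From HB Require Import structures.
From mathcomp Require Import all_boot all_order all_fingroup all_algebra.
From mathcomp Require Import primitive_action alt zify.
Set Implicit Arguments. Unset Strict Implicit. Unset Printing Implicit Defensive.
Import GRing.Theory.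

Lemma ext_perm l m (g s : 'I_l -> 'I_m) : injective g -> injective s ->
  exists w : {perm 'I_m}, forall a, w (g a) = s a.
Proof.
move=> ig iS.
have lem : l <= #|'I_m|.
  by rewrite -(card_ord l) -(card_codom ig); apply: max_card.
have tr := ntransitive_weak lem (Sym_trans 'I_m).
have dg : [tuple g i | i < l] \in l.-dtuple(setT).
  by apply/dtuple_onP; split=> [i j|i]; rewrite ?inE // !tnth_mktuple => /ig.
have ds : [tuple s i | i < l] \in l.-dtuple(setT).
  by apply/dtuple_onP; split=> [i j|i]; rewrite ?inE // !tnth_mktuple => /iS.
have [w _ E] := atransP2 tr dg ds.
exists w => a.
have := congr1 (fun t => tnth t a) E; rewrite /= tnth_map.
rewrite /n_act tnth_map tnth_mktuple tnth_ord_tuple.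

by move=> ->.
Qed.
Local Open Scope ring_scope.

Lemma eqWg m l (w : {perm 'I_m}) (g s : {ffun 'I_l -> 'I_m}) :
  ([ffun a => (w^-1)%g (s a)] == g) = ([ffun a => w (g a)] == s).
Proof.
apply/eqP/eqP => E; apply/ffunP => a.
  by have := congr1 (fun h : {ffun 'I_l -> 'I_m} => h a) E; rewrite !ffunE => <-; rewrite permKV.
by have := congr1 (fun h : {ffun 'I_l -> 'I_m} => h a) E; rewrite !ffunE => <-; rewrite permK.
Qed.

Lemma Hmod_iff (k : pzRingType) m l (x : tens k l m) : (l <= m)%N ->
  Hmod x <-> (forall s, x s != 0 -> injectiveb s).
Proof.
move=> lm; split.
  move=> [g [Hg [c ->]]] s; rewrite ffunE; apply: contraR => ns.
  have ginj : injective g.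
    move=> i j /(congr1 val); rewrite !Hg => /eqP; rewrite eqn_add2l => /eqP.
    exact: val_inj.
  apply/eqP/big1 => w _; rewrite /Wact /tsub /basisv !ffunE eqWg.
  case: eqP => [E|_]; last by rewrite mulr0.
  case/negP: ns; apply/injectiveP => i j; rewrite -E !ffunE => /perm_inj.
  exact: ginj.
move=> H.
have P : forall i : 'I_l, (m - l + i < m)%N by move=> i; have := ltn_ord i; lia.
pose g0 : {ffun 'I_l -> 'I_m} := [ffun i => Ordinal (P i)].
have g0inj : injective g0.
  move=> i j; rewrite !ffunE => /(congr1 val) /= /eqP; rewrite eqn_add2l => /eqP.
  exact: val_inj.
pose pk s := [pick w : {perm 'I_m} | [ffun a => w (g0 a)] == s].
exists g0; split; first by move=> i; rewrite ffunE.
exists (fun w : {perm 'I_m} => if pk [ffun a => w (g0 a)] == Some w then x [ffun a => w (g0 a)] else 0).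
apply/ffunP => s; rewrite ffunE.
transitivity (\sum_(w : {perm 'I_m}) (if [ffun a => w (g0 a)] == s then
                  (if pk s == Some w then x s else 0) else 0)); last first.
  apply: eq_bigr => w _; rewrite /Wact /tsub /basisv !ffunE eqWg.
  by case: eqP => [->|_]; rewrite ?mulr1 ?mulr0.
rewrite /pk; case: pickP => [w0 E0|none].
  rewrite (bigD1 w0) //= E0 eqxx big1 ?addr0 // => w ne.
  case: ifP => // _; case: eqP => // -[] E; by rewrite E eqxx in ne.
rewrite big1 => [|w _]; last by rewrite none.
apply/eqP; apply: contraT => /H /injectiveP si.
have [w Ew] := ext_perm g0inj si.
by have := none w; rewrite (_ : [ffun a => w (g0 a)] = s) ?eqxx //; apply/ffunP => a; rewrite ffunE.
Qed.
Lemma transfer (k : pzRingType) (G : Type) m1 n1 m2 n2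
 (a1 : G -> tens k m1 n1 -> tens k m1 n1) (a2 : G -> tens k m2 n2 -> tens k m2 n2)
 (u : G -> {ffun 'I_m1 -> 'I_n1} -> {ffun 'I_m1 -> 'I_n1})
 (v : G -> {ffun 'I_m2 -> 'I_n2} -> {ffun 'I_m2 -> 'I_n2})
 (A : {ffun 'I_m1 -> 'I_n1} -> Prop) (B : pred {ffun 'I_m2 -> 'I_n2})
 (f : {ffun 'I_m2 -> 'I_n2} -> {ffun 'I_m1 -> 'I_n1}) :
 (forall g x, a1 g x = [ffun t => x (u g t)]) ->
 (forall g y, a2 g y = [ffun s => y (v g s)]) ->
 (forall s, B s -> A (f s)) ->
 (forall s s', B s -> B s' -> f s = f s' -> s = s') ->
 (forall t, A t -> exists2 s, B s & f s = t) ->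
 (forall g s, B (v g s) = B s) ->
 (forall g s, B s -> f (v g s) = u g (f s)) ->
 kG_iso a1 a2 (fun x => forall t, x t != 0 -> A t) (fun y => forall s, y s != 0 -> B s).
Proof.
move=> a1E a2E fA finj fsurj vB fv.
exists (fun x => [ffun s => if B s then x (f s) else 0]); split.
- move=> x _ s; rewrite ffunE; by case: (B s); rewrite ?eqxx.
- move=> x y Mx My E; apply/ffunP => t.
  have key : A t -> x t = y t.
    move=> /fsurj [s Bs <-].
    by have := congr1 (fun z : tens k m2 n2 => z s) E; rewrite /= !ffunE Bs.
  case: (eqVneq (x t) 0) => [x0|xn]; last exact/key/Mx.
  case: (eqVneq (y t) 0) => [y0|yn]; last exact/key/My.
  by rewrite x0 y0.
- move=> y My.
  exists [ffun t => if [pick s | B s && (f s == t)] is Some s then y s else 0].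
    move=> t; rewrite ffunE; case: pickP => [s /andP [Bs /eqP <-] _|_].
      exact: fA.
    by rewrite eqxx.
  apply/ffunP => s; rewrite !ffunE.
  case Bs: (B s).
    case: pickP => [s' /andP [Bs' /eqP E]|/(_ s)]; last by rewrite Bs eqxx.
    by rewrite (finj _ _ Bs' Bs E).
  by apply/esym/eqP; apply: contraFT Bs => /My.
- split; last split.
  + move=> x y _ _; apply/ffunP => s; rewrite !ffunE.
    by case: (B s); rewrite ?addr0 ?ffunE.
  + move=> c x _; apply/ffunP => s; rewrite !ffunE.
    by case: (B s); rewrite ?mulr0 ?ffunE.
  + move=> g x _; apply/ffunP => s; rewrite a1E a2E !ffunE vB.
    by case Bs: (B s); rewrite ?ffunE // fv.
Qed.
Local Close Scope ring_scope.

Lemma VT r n (L : {set {set 'I_r}}) (t : {ffun 'I_r -> 'I_n}) :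
  partition L [set: 'I_r] ->
  (valtype t = L) <-> (forall a b, (t a == t b) = (b \in pblock L a)).
Proof.
move=> /and3P [/eqP cov tI n0].
have cv a : a \in cover L by rewrite cov inE.
split.
  move=> VE a b.
  have FL : [set x | t x == t a] \in L.
    rewrite -VE /valtype in_setD1; apply/andP; split; last exact: imset_f.
    by apply/set0Pn; exists a; rewrite inE.
  by rewrite (def_pblock tI FL) ?inE // eq_sym.
move=> H; apply/setP => X; rewrite /valtype in_setD1; apply/andP/idP.
  move=> [/set0Pn [a aX] /imsetP [j _ XE]].
  move: aX; rewrite XE inE => /eqP ta.
  have -> : [set a0 | t a0 == j] = pblock L a.
    by apply/setP => b; rewrite inE -H ta.
  exact: pblock_mem.
move=> XL.
have : X != set0 by apply: contraNneq n0 => <-.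
case/set0Pn => a aX; split; first by apply/set0Pn; exists a.
apply/imsetP; exists (t a) => //; apply/setP => b.
by rewrite inE -(def_pblock tI XL aX) -H eq_sym.
Qed.

Lemma idx_ex r l (L : {set {set 'I_r}}) : partition L [set: 'I_r] -> #|L| = l ->
  (0 < r)%N ->
  exists idx : 'I_r -> 'I_l, exists rep : 'I_l -> 'I_r,
   (forall a b, (idx a == idx b) = (b \in pblock L a)) /\ (forall i, idx (rep i) = i).
Proof.
move=> pL cL r0; have /and3P [/eqP cov tI n0] := pL.
have cv a : a \in cover L by rewrite cov inE.
pose e := enum L.
have lt a : (index (pblock L a) e < l)%N.
  by rewrite -cL cardE index_mem mem_enum pblock_mem.
pose idx a := Ordinal (lt a).
have idxP a b : (idx a == idx b) = (b \in pblock L a).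
  rewrite -val_eqE /= -(eq_pblock _ tI (cv a)).
  apply/eqP/eqP => [E|->] //.
  have Ea : pblock L a \in e by rewrite mem_enum pblock_mem.
  have Eb : pblock L b \in e by rewrite mem_enum pblock_mem.
  by rewrite -(nth_index set0 Ea) E nth_index.
exists idx, (fun i => odflt (Ordinal r0) [pick a | idx a == i]); split => // i.
case: pickP => [a /eqP //|none]; exfalso.
have iL : (i < size e)%N by rewrite -cardE cL.
have XL : nth set0 e i \in L by rewrite -mem_enum mem_nth.
have : nth set0 e i != set0 by apply: contraNneq n0 => <-.
case/set0Pn => a aX.
have := none a; suff -> : idx a = i by rewrite eqxx.
apply/val_inj => /=.
by rewrite (def_pblock tI XL aX) index_uniq // enum_uniq.
Qed.

Lemma VT_comp r n l (L : {set {set 'I_r}}) (idx : 'I_r -> 'I_l) (rep : 'I_l -> 'I_r) :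
  partition L [set: 'I_r] ->
  (forall a b, (idx a == idx b) = (b \in pblock L a)) -> (forall i, idx (rep i) = i) ->
  forall h : 'I_l -> 'I_n, valtype [ffun a => h (idx a)] = L <-> injective h.
Proof.
move=> pL iP rP h; rewrite VT //; split.
  move=> H i j E; apply/eqP.
  by have := H (rep i) (rep j); rewrite !ffunE !rP E eqxx -iP !rP => <-.
by move=> hi a b; rewrite !ffunE (inj_eq hi) iP.
Qed.

Lemma VT_pre r n l (L : {set {set 'I_r}}) (idx : 'I_r -> 'I_l) (rep : 'I_l -> 'I_r) :
  partition L [set: 'I_r] ->
  (forall a b, (idx a == idx b) = (b \in pblock L a)) -> (forall i, idx (rep i) = i) ->
  forall t : {ffun 'I_r -> 'I_n}, valtype t = L ->
  exists2 h : 'I_l -> 'I_n, injective h & t = [ffun a => h (idx a)].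
Proof.
move=> pL iP rP t VE.
have E : t = [ffun a => t (rep (idx a))].
  apply/ffunP => a; rewrite ffunE; apply/eqP.
  by move/VT: VE => /(_ pL) ->; rewrite -iP rP.
exists (fun i => t (rep i)) => //.
by apply/(VT_comp pL iP rP); rewrite -E.
Qed.

Lemma idx_ex' r l (L : {set {set 'I_r}}) (a0 : 'I_r) : partition L [set: 'I_r] -> #|L| = l.+1 ->
  exists idx : 'I_r -> 'I_l.+1, exists rep : 'I_l.+1 -> 'I_r,
   [/\ (forall a b, (idx a == idx b) = (b \in pblock L a)), (forall i, idx (rep i) = i)
     & idx a0 = ord_max].
Proof.
move=> pL cL.
have r0 : (0 < r)%N by case: r a0 {L pL cL} => // -[].
have [idx [rep [iP rP]]] := idx_ex pL cL r0.
pose tau := tperm (idx a0) ord_max.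
exists (fun a => tau (idx a)), (fun i => rep (tau i)); split.
- by move=> a b; rewrite (inj_eq perm_inj) iP.
- by move=> i; rewrite rP tpermK.
- by rewrite tpermL.
Qed.

Definition ext l m (s : 'I_l -> 'I_m) (i : 'I_l.+1) : 'I_m.+1 :=
  if unlift ord_max i is Some j then lift ord_max (s j) else ord_max.

Lemma ext_max l m (s : 'I_l -> 'I_m) : ext s ord_max = ord_max.
Proof. by rewrite /ext unlift_none. Qed.

Lemma ext_lift l m (s : 'I_l -> 'I_m) j : ext s (lift ord_max j) = lift ord_max (s j).
Proof. by rewrite /ext liftK. Qed.

Lemma ext_inj l m (s : 'I_l -> 'I_m) : injective s -> injective (ext s).
Proof.
move=> si i j.
case: (unliftP ord_max i) => [i'|] ->; case: (unliftP ord_max j) => [j'|] ->;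
  rewrite ?ext_lift ?ext_max //.
- by move=> /lift_inj /si ->.
- by move=> /eqP; rewrite eq_sym (negbTE (neq_lift _ _)).
- by move=> /eqP; rewrite (negbTE (neq_lift _ _)).
Qed.

Lemma kG_iso_ext (k : pzRingType) (G : Type) m1 n1 m2 n2
  (a1 : G -> tens k m1 n1 -> tens k m1 n1) (a2 : G -> tens k m2 n2 -> tens k m2 n2)
  (M1 : tens k m1 n1 -> Prop) (M2 M2' : tens k m2 n2 -> Prop) :
  (forall y, M2 y <-> M2' y) -> kG_iso a1 a2 M1 M2 -> kG_iso a1 a2 M1 M2'.
Proof.
move=> H [phi [h1 h2 h3 h4]]; exists phi; split => //.
- by move=> x /h1 /H.
- by move=> y /H /h3.
Qed.

Theorem proposition4p10 (k : pzRingType) (n r : nat)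
  (L : {set {set 'I_r}}) (L' : {set {set 'I_r.+1}}) :
  (0 < n)%N -> (0 < r)%N ->
  partition L [set: 'I_r] -> (#|L| <= n)%N ->
  partition L' [set: 'I_r.+1] -> (#|L'| <= n)%N ->
  kG_iso (@Wact k r n) (@Wact k #|L| n) (@Vmod k n r L) (@Hmod k n #|L|)
  /\ (forall m, n = m.+1 ->
      kG_iso (@Wact' k r.+1 m) (@Wact k (#|L'| - 1) m)
             (@Vmod' k m r L') (@Hmod k m (#|L'| - 1))).
Proof.
move=> n0 r0 pL cLn pL' cL'n; split.
  apply: (@kG_iso_ext _ _ _ _ _ _ _ _ _ (fun y => forall s, y s != 0%R -> injectiveb s)).
    by move=> y; apply: iff_sym; apply: Hmod_iff.
  have [idx [rep [iP rP]]] := idx_ex pL (erefl #|L|) r0.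
  rewrite /Vmod; apply: (@transfer _ _ _ _ _ _ (@Wact k r n) (@Wact k #|L| n) (fun w t => [ffun a => (w^-1)%g (t a)])
     (fun w s => [ffun a => (w^-1)%g (s a)]) (fun t => valtype t = L)
     (fun s => injectiveb s) (fun s => [ffun a => s (idx a)])) => //.
  - by move=> s /injectiveP si; apply/(VT_comp pL iP rP).
  - move=> s s' _ _ E; apply/ffunP => i.
    by have := congr1 (fun h : {ffun 'I_r -> 'I_n} => h (rep i)) E; rewrite !ffunE rP.
  - move=> t /(VT_pre pL iP rP) [h hi ->]; exists [ffun i => h i].
      by apply/injectiveP => i j; rewrite !ffunE; apply: hi.
    by apply/ffunP => a; rewrite !ffunE.
  - move=> w s; apply/injectiveP/injectiveP => si i j.
      by move=> E; apply: si; rewrite !ffunE E.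
    by rewrite !ffunE => /perm_inj; apply: si.
  - by move=> w s _; apply/ffunP => a; rewrite !ffunE.
move=> m nE; subst n.
have cl : #|L'| = (#|L'| - 1).+1.
  have : (0 < #|L'|)%N.
    apply/card_gt0P; exists (pblock L' ord_max); apply: pblock_mem.
    by move: pL' => /and3P [/eqP -> _ _]; rewrite inE.
  lia.
have le : (#|L'| - 1 <= m)%N by lia.
have [idx [rep [iP rP imax]]] := idx_ex' ord_max pL' cl.
apply: (@kG_iso_ext _ _ _ _ _ _ _ _ _ (fun y => forall s, y s != 0%R -> injectiveb s)).
  by move=> y; apply: iff_sym; apply: Hmod_iff.
rewrite /Vmod'; apply: (@transfer _ _ _ _ _ _ (@Wact' k r.+1 m) (@Wact k (#|L'| - 1) m)
   (fun w t => [ffun a => ((lift_perm ord_max ord_max w)^-1)%g (t a)])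
   (fun w s => [ffun a => (w^-1)%g (s a)])
   (fun t => t ord_max = ord_max /\ valtype t = L')
   (fun s => injectiveb s) (fun s => [ffun a => ext s (idx a)])) => //.
- move=> s /injectiveP si; split; first by rewrite ffunE imax ext_max.
  by apply/(VT_comp pL' iP rP)/ext_inj.
- move=> s s' _ _ E; apply/ffunP => j.
  have := congr1 (fun h : {ffun 'I_r.+1 -> 'I_m.+1} => h (rep (lift ord_max j))) E.
  by rewrite !ffunE rP !ext_lift => /lift_inj.
- move=> t [tm /(VT_pre pL' iP rP) [h hi tE]].
  have hm : h ord_max = ord_max by move: tm; rewrite tE ffunE imax.
  pose s := [ffun j => odflt (widen_ord le j) (unlift ord_max (h (lift ord_max j)))].
  have es : forall i, ext s i = h i.
    move=> i; case: (unliftP ord_max i) => [j|] ->; last by rewrite ext_max hm.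
    rewrite ext_lift ffunE; case: (unliftP ord_max (h (lift ord_max j))) => [j'|] E.
      by rewrite E.
    by move: E; rewrite -hm => /hi /eqP; rewrite eq_sym (negbTE (neq_lift _ _)).
  exists s.
    apply/injectiveP => i j E.
    have : ext s (lift ord_max i) = ext s (lift ord_max j) by rewrite !ext_lift E.
    by rewrite !es => /hi /lift_inj.
  by apply/ffunP => a; rewrite tE !ffunE es.
- move=> w s; apply/injectiveP/injectiveP => si i j.
    by move=> E; apply: si; rewrite !ffunE E.
  by rewrite !ffunE => /perm_inj; apply: si.
- move=> w s _; apply/ffunP => a; rewrite !ffunE lift_permV.
  case: (unliftP ord_max (idx a)) => [j|] ->.
    by rewrite !ext_lift ffunE lift_perm_lift.
  by rewrite !ext_max lift_perm_id.
Qed.
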